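(* Let $\Phi$ be a positive, trace-preserving, unital (bistochastic) linear map on hermitian $2\times2$ matrices of the form $$\Phi\big(\tfrac12(x_0I+\vec x\cdot\vec\sigma)\big)=\tfrac12\big(x_0I+(\Lambda\vec x)\cdot\vec\sigma\big),\qquad \Lambda=\mathrm{diag}(\lambda_1,\lambda_2,\lambda_3).$$ Let $w=\max(\lambda_1^2,\lambda_2^2,\lambda_3^2)$. Then the concurrence of $\Phi$ at the state $\rho=\tfrac12(I+\vec x\cdot\vec\sigma)$ (with $x_0=1$) is $$C_\Phi(\rho)=\sqrt{(1-w)x_0^2+\sum_{i=1}^3(w-\lambda_i^2)x_i^2}.$$ This convex roof is flat.
   Context: States of a qubit are $\rho=\tfrac12(x_0I+\vec x\cdot\vec\sigma)$ with $x_0=1$ and $|\vec x|\le1$, where $\vec\sigma$ are the Pauli matrices. Pure states are those with $|\vec x|=1$. The concurrence of a positive trace-preserving map $\Phi$ is defined as follows. For a pure state $\pi$, $C_\Phi(\pi)=2\sqrt{\det\Phi(\pi)}$. For a general state, $C_\Phi(\rho)=\min\sum_j p_jC_\Phi(\pi_j)$, where the minimum is over all decompositions $\rho=\sum_j p_j\pi_j$ into pure states with $p_j>0$ and $\sum_j p_j=1$. A convex roof is flat if the Bloch ball is foliated into leaves, each the convex hull of pure states, on each of which the function is constant. *)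

(* Defs.v *)
From Stdlib Require Import Reals Lra List.
Import ListNotations.
Open Scope R_scope.

(* Bloch vectors in R^3. A hermitian 2x2 matrix is (1/2)(x0 I + y . sigma). *)
Definition vec : Type := (R * R * R)%type.
Definition bx1 (v : vec) : R := fst (fst v).
Definition bx2 (v : vec) : R := snd (fst v).
Definition bx3 (v : vec) : R := snd v.
Definition vzero : vec := (0, 0, 0).
Definition vadd (u v : vec) : vec := (bx1 u + bx1 v, bx2 u + bx2 v, bx3 u + bx3 v).
Definition vscale (a : R) (v : vec) : vec := (a * bx1 v, a * bx2 v, a * bx3 v).
Definition norm2 (v : vec) : R := bx1 v ^ 2 + bx2 v ^ 2 + bx3 v ^ 2.

(* Determinant of the hermitian matrix (1/2)(x0 I + y . sigma):
   det = (x0^2 - |y|^2)/4. *)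
Definition det_bloch (x0 : R) (y : vec) : R := (x0 ^ 2 - norm2 y) / 4.

(* The Bloch-vector part of Phi: y |-> Lambda y, Lambda = diag(l1,l2,l3).
   Phi((1/2)(x0 I + y.sigma)) = (1/2)(x0 I + (Lambda y).sigma). *)
Definition Lam (l1 l2 l3 : R) (y : vec) : vec := (l1 * bx1 y, l2 * bx2 y, l3 * bx3 y).

(* Positivity of Phi: (1/2)(x0 I + y.sigma) >= 0  iff  |y| <= x0;
   Phi positive iff it maps PSD matrices to PSD matrices. *)
Definition positive_map (l1 l2 l3 : R) : Prop :=
  forall (x0 : R) (y : vec), 0 <= x0 -> norm2 y <= x0 ^ 2 ->
    norm2 (Lam l1 l2 l3 y) <= x0 ^ 2.

Definition is_state (x : vec) : Prop := norm2 x <= 1.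
Definition is_pure (x : vec) : Prop := norm2 x = 1.

Definition C_pure (l1 l2 l3 : R) (y : vec) : R :=
  2 * sqrt (det_bloch 1 (Lam l1 l2 l3 y)).

Definition wsum (d : list (R * vec)) : vec :=
  fold_right (fun pv acc => vadd (vscale (fst pv) (snd pv)) acc) vzero d.
Definition psum (d : list (R * vec)) : R :=
  fold_right (fun pv acc => fst pv + acc) 0 d.

Definition is_convex_decomp (S : vec -> Prop) (d : list (R * vec)) (x : vec) : Prop :=
  (forall pv, In pv d -> 0 < fst pv /\ S (snd pv)) /\
  psum d = 1 /\ wsum d = x.

Definition is_pure_decomp (d : list (R * vec)) (x : vec) : Prop :=
  is_convex_decomp is_pure d x.

Definition roof_cost (l1 l2 l3 : R) (d : list (R * vec)) : R :=
  fold_right (fun pv acc => fst pv * C_pure l1 l2 l3 (snd pv) + acc) 0 d.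

Definition concurrence_is (l1 l2 l3 : R) (x : vec) (c : R) : Prop :=
  (exists d, is_pure_decomp d x /\ roof_cost l1 l2 l3 d = c) /\
  (forall d, is_pure_decomp d x -> c <= roof_cost l1 l2 l3 d).

Definition conv (S : vec -> Prop) (z : vec) : Prop :=
  exists d, is_convex_decomp S d z.

Definition foliation_by_pure_hulls (F : (vec -> Prop) -> Prop) : Prop :=
  (forall L, F L -> exists S : vec -> Prop,
       (forall y, S y -> is_pure y) /\ (forall z, L z <-> conv S z)) /\
  (forall L, F L -> exists z, L z) /\
  (forall x, is_state x -> exists L, F L /\ L x) /\
  (forall L L' x, F L -> F L' -> L x -> L' x -> forall z, L z <-> L' z).

Definition flat_roof (l1 l2 l3 : R) : Prop :=
  exists F, foliation_by_pure_hulls F /\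
    forall L, F L -> exists c, forall x, L x -> concurrence_is l1 l2 l3 x c.

(* Main.v *)
Require Import Defs.
From Stdlib Require Import Reals Lra List.
Import ListNotations.
Open Scope R_scope.

Lemma cs4 c0 c1 c2 c3 u0 u1 u2 u3 v0 v1 v2 v3 :
  0 <= c0 -> 0 <= c1 -> 0 <= c2 -> 0 <= c3 ->
  (c0*u0*v0 + c1*u1*v1 + c2*u2*v2 + c3*u3*v3)^2 <=
  (c0*u0^2 + c1*u1^2 + c2*u2^2 + c3*u3^2) * (c0*v0^2 + c1*v1^2 + c2*v2^2 + c3*v3^2).
Proof.
  intros H0 H1 H2 H3.
  assert (E : (c0*u0^2 + c1*u1^2 + c2*u2^2 + c3*u3^2) * (c0*v0^2 + c1*v1^2 + c2*v2^2 + c3*v3^2)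
    - (c0*u0*v0 + c1*u1*v1 + c2*u2*v2 + c3*u3*v3)^2 =
    c0*c1*(u0*v1-u1*v0)^2 + c0*c2*(u0*v2-u2*v0)^2 + c0*c3*(u0*v3-u3*v0)^2
    + c1*c2*(u1*v2-u2*v1)^2 + c1*c3*(u1*v3-u3*v1)^2 + c2*c3*(u2*v3-u3*v2)^2) by ring.
  assert (P : forall a b z, 0 <= a -> 0 <= b -> 0 <= a*b*z^2).
  { intros a b z Ha Hb. apply Rmult_le_pos. apply Rmult_le_pos; auto. apply pow2_ge_0. }
  pose proof (P c0 c1 (u0*v1-u1*v0) H0 H1).
  pose proof (P c0 c2 (u0*v2-u2*v0) H0 H2).
  pose proof (P c0 c3 (u0*v3-u3*v0) H0 H3).
  pose proof (P c1 c2 (u1*v2-u2*v1) H1 H2).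
  pose proof (P c1 c3 (u1*v3-u3*v1) H1 H3).
  pose proof (P c2 c3 (u2*v3-u3*v2) H2 H3).
  lra.
Qed.

Lemma tri4 c0 c1 c2 c3 u0 u1 u2 u3 v0 v1 v2 v3 :
  0 <= c0 -> 0 <= c1 -> 0 <= c2 -> 0 <= c3 ->
  sqrt (c0*(u0+v0)^2 + (c1*(u1+v1)^2 + c2*(u2+v2)^2 + c3*(u3+v3)^2)) <=
  sqrt (c0*u0^2 + (c1*u1^2 + c2*u2^2 + c3*u3^2)) + sqrt (c0*v0^2 + (c1*v1^2 + c2*v2^2 + c3*v3^2)).
Proof.
  intros H0 H1 H2 H3.
  pose proof (cs4 c0 c1 c2 c3 u0 u1 u2 u3 v0 v1 v2 v3 H0 H1 H2 H3) as CS.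
  set (S := c0*u0*v0 + c1*u1*v1 + c2*u2*v2 + c3*u3*v3) in *.
  assert (HA : 0 <= c0*u0^2 + (c1*u1^2 + c2*u2^2 + c3*u3^2)).
  { pose proof (pow2_ge_0 u0); pose proof (pow2_ge_0 u1); pose proof (pow2_ge_0 u2); pose proof (pow2_ge_0 u3).
    assert (0 <= c0*u0^2) by (apply Rmult_le_pos; auto).
    assert (0 <= c1*u1^2) by (apply Rmult_le_pos; auto).
    assert (0 <= c2*u2^2) by (apply Rmult_le_pos; auto).
    assert (0 <= c3*u3^2) by (apply Rmult_le_pos; auto). lra. }
  assert (HB : 0 <= c0*v0^2 + (c1*v1^2 + c2*v2^2 + c3*v3^2)).
  { pose proof (pow2_ge_0 v0); pose proof (pow2_ge_0 v1); pose proof (pow2_ge_0 v2); pose proof (pow2_ge_0 v3).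
    assert (0 <= c0*v0^2) by (apply Rmult_le_pos; auto).
    assert (0 <= c1*v1^2) by (apply Rmult_le_pos; auto).
    assert (0 <= c2*v2^2) by (apply Rmult_le_pos; auto).
    assert (0 <= c3*v3^2) by (apply Rmult_le_pos; auto). lra. }
  set (A := c0*u0^2 + (c1*u1^2 + c2*u2^2 + c3*u3^2)) in *.
  set (B := c0*v0^2 + (c1*v1^2 + c2*v2^2 + c3*v3^2)) in *.
  assert (HS : S <= sqrt A * sqrt B).
  { destruct (Rle_or_lt S 0).
    - pose proof (sqrt_pos A); pose proof (sqrt_pos B).
      pose proof (Rmult_le_pos _ _ H4 H5). lra.
    - rewrite <- sqrt_mult by auto. rewrite <- (sqrt_pow2 S) by lra.
      apply sqrt_le_1_alt. unfold A, B. lra. }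
  pose proof (sqrt_pos A); pose proof (sqrt_pos B).
  rewrite <- (sqrt_pow2 (sqrt A + sqrt B)) by lra.
  apply sqrt_le_1_alt.
  replace ((sqrt A + sqrt B)^2) with (sqrt A * sqrt A + sqrt B * sqrt B + 2 * (sqrt A * sqrt B)) by ring.
  rewrite !sqrt_sqrt by auto.
  assert (E : c0*(u0+v0)^2 + (c1*(u1+v1)^2 + c2*(u2+v2)^2 + c3*(u3+v3)^2) = A + B + 2*S)
    by (unfold A, B, S; ring).
  rewrite E. lra.
Qed.

Definition Gf (c0 a1 a2 a3 x0 : R) (y : vec) : R :=
  sqrt (c0 * x0 ^ 2 + (a1 * bx1 y ^ 2 + a2 * bx2 y ^ 2 + a3 * bx3 y ^ 2)).

Definition gcost (g : vec -> R) (d : list (R * vec)) : R :=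
  fold_right (fun pv acc => fst pv * g (snd pv) + acc) 0 d.

Lemma Gf_scale c0 a1 a2 a3 p y : 0 <= c0 -> 0 <= a1 -> 0 <= a2 -> 0 <= a3 -> 0 <= p ->
  Gf c0 a1 a2 a3 p (vscale p y) = p * Gf c0 a1 a2 a3 1 y.
Proof.
  intros H0 H1 H2 H3 Hp. destruct y as [[y1 y2] y3]. unfold Gf, vscale, bx1, bx2, bx3; cbn [fst snd].
  replace (c0 * p ^ 2 + (a1 * (p * y1) ^ 2 + a2 * (p * y2) ^ 2 + a3 * (p * y3) ^ 2))
    with (p^2 * (c0 * 1 ^ 2 + (a1 * y1 ^ 2 + a2 * y2 ^ 2 + a3 * y3 ^ 2))) by ring.
  rewrite sqrt_mult.
  2: apply pow2_ge_0. rewrite sqrt_pow2 by auto. reflexivity.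
  pose proof (pow2_ge_0 (y1)); pose proof (pow2_ge_0 (y2)); pose proof (pow2_ge_0 (y3)).
  assert (0 <= a1 * y1 ^ 2) by (apply Rmult_le_pos; auto).
  assert (0 <= a2 * y2 ^ 2) by (apply Rmult_le_pos; auto).
  assert (0 <= a3 * y3 ^ 2) by (apply Rmult_le_pos; auto). lra.
Qed.

Lemma Gf_convex c0 a1 a2 a3 d : 0 <= c0 -> 0 <= a1 -> 0 <= a2 -> 0 <= a3 ->
  (forall pv, In pv d -> 0 <= fst pv) ->
  Gf c0 a1 a2 a3 (psum d) (wsum d) <= gcost (Gf c0 a1 a2 a3 1) d.
Proof.
  intros H0 H1 H2 H3. induction d as [|[p y] d IH]; intros Hd.
  - cbn [fold_right psum wsum gcost]. unfold Gf, vzero, bx1, bx2, bx3; cbn [fst snd].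
    replace (c0 * 0 ^ 2 + (a1 * 0 ^ 2 + a2 * 0 ^ 2 + a3 * 0 ^ 2)) with 0 by ring.
    rewrite sqrt_0; lra.
  - cbn [fold_right psum wsum gcost fst snd]. assert (Hp : 0 <= p) by (apply (Hd (p,y)); left; auto).
    assert (IH' := IH (fun pv H => Hd pv (or_intror H))).
    rewrite <- (Gf_scale c0 a1 a2 a3 p y) by auto.
    eapply Rle_trans; [|apply Rplus_le_compat_l; exact IH'].
    unfold Gf at 1. unfold vadd. unfold bx1 at 1 2 3. unfold bx2 at 1 2 3. unfold bx3 at 1 2 3. cbn [fst snd].
    apply (tri4 c0 a1 a2 a3); auto.
Qed.

Lemma vext (u v : vec) : bx1 u = bx1 v -> bx2 u = bx2 v -> bx3 u = bx3 v -> u = v.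
Proof. destruct u as [[a b] c], v as [[a' b'] c']; unfold bx1, bx2, bx3; simpl; intros; subst; auto. Qed.

Lemma line_wsum (a e : vec) d :
  (forall pv, In pv d -> exists t, snd pv = vadd a (vscale t e)) ->
  exists T, wsum d = vadd (vscale (psum d) a) (vscale T e).
Proof.
  induction d as [|[p y] d IH]; intros Hd.
  - exists 0. destruct a as [[a1 a2] a3], e as [[e1 e2] e3].
    unfold wsum, psum, vzero, vadd, vscale, bx1, bx2, bx3; cbn. f_equal; [f_equal|]; ring.
  - destruct IH as [T HT]. { intros pv H; apply Hd; right; auto. }
    destruct (Hd (p,y) (or_introl eq_refl)) as [t Ht]. simpl in Ht.
    exists (p*t + T). cbn [wsum psum fold_right fst snd].
    change (fold_right (fun pv acc => vadd (vscale (fst pv) (snd pv)) acc) vzero d) with (wsum d).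
    change (fold_right (fun pv acc => fst pv + acc) 0 d) with (psum d).
    rewrite HT, Ht. destruct a as [[a1 a2] a3], e as [[e1 e2] e3].
    unfold vadd, vscale, bx1, bx2, bx3; cbn. f_equal; [f_equal|]; ring.
Qed.

Lemma state_of_conv d z : is_convex_decomp is_pure d z -> is_state z.
Proof.
  intros [Hd [Hp Hw]].
  assert (Hc := Gf_convex 0 1 1 1 d (Rle_refl 0) Rle_0_1 Rle_0_1 Rle_0_1
                 (fun pv H => Rlt_le _ _ (proj1 (Hd pv H)))).
  assert (E : gcost (Gf 0 1 1 1 1) d = psum d).
  { clear Hp Hw Hc. induction d as [|[p y] d IH]; [reflexivity|].
    cbn [gcost psum fold_right fst snd].
    change (fold_right (fun pv acc => fst pv * Gf 0 1 1 1 1 (snd pv) + acc) 0 d) with (gcost (Gf 0 1 1 1 1) d).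
    change (fold_right (fun pv acc => fst pv + acc) 0 d) with (psum d).
    rewrite IH by (intros; apply Hd; right; auto).
    destruct (Hd (p,y) (or_introl eq_refl)) as [_ Hy]. unfold is_pure, norm2 in Hy; simpl in Hy.
    unfold Gf. replace (0 * 1 ^ 2 + (1 * bx1 y ^ 2 + 1 * bx2 y ^ 2 + 1 * bx3 y ^ 2)) with 1 by lra.
    rewrite sqrt_1; ring. }
  rewrite E, Hp, Hw in Hc. unfold Gf in Hc.
  replace (0 * 1 ^ 2 + (1 * bx1 z ^ 2 + 1 * bx2 z ^ 2 + 1 * bx3 z ^ 2)) with (norm2 z) in Hc
    by (unfold norm2; ring).
  unfold is_state. destruct (Rle_or_lt (norm2 z) 1); auto.
  assert (sqrt 1 < sqrt (norm2 z)) by (apply sqrt_lt_1_alt; lra). rewrite sqrt_1 in H0; lra.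
Qed.

Lemma attain (g : vec -> R) (e x : vec) : norm2 e = 1 ->
  (forall z t, g (vadd z (vscale t e)) = g z) -> is_state x ->
  exists d, is_convex_decomp (fun y => is_pure y /\ exists t, y = vadd x (vscale t e)) d x
         /\ gcost g d = g x.
Proof.
  intros He Hg Hx. unfold is_state in Hx.
  destruct (Req_dec (norm2 x) 1) as [Hp|Hp].
  - exists [(1, x)]. split; [split; [|split]|].
    + intros pv [<-|[]]; simpl. split; [lra|]. split; auto. exists 0.
      destruct x as [[a1 a2] a3], e as [[e1 e2] e3].
      unfold vadd, vscale, bx1, bx2, bx3; cbn. f_equal; [f_equal|]; ring.
    + simpl; ring.
    + destruct x as [[a1 a2] a3]. unfold wsum, vzero, vadd, vscale, bx1, bx2, bx3; cbn. f_equal; [f_equal|]; ring.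
    + simpl; ring.
  - set (b := bx1 x * bx1 e + bx2 x * bx2 e + bx3 x * bx3 e).
    set (D := b^2 + (1 - norm2 x)).
    assert (HD : b^2 < D) by (unfold D; lra).
    assert (HD0 : 0 <= D) by (pose proof (pow2_ge_0 b); lra).
    set (r := sqrt D).
    assert (Hr2 : r * r = D) by (apply sqrt_sqrt; auto).
    assert (Hr0 : 0 <= r) by apply sqrt_pos.
    assert (Hrb : b < r /\ - b < r).
    { assert (HH: Rabs b < r).
      { unfold r. rewrite <- sqrt_Rsqr_abs. apply sqrt_lt_1_alt. unfold Rsqr. split.
        nra. nra. }
      split; [apply Rle_lt_trans with (Rabs b); [apply Rle_abs|auto]|].
      apply Rle_lt_trans with (Rabs b); auto. rewrite <- Rabs_Ropp; apply Rle_abs. }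
    assert (Hrp : 0 < r) by lra.
    set (tp := -b + r). set (tm := -b - r).
    set (p := (b + r)/(2*r)). set (q := (r - b)/(2*r)).
    assert (Hpq : p + q = 1) by (unfold p, q; field; lra).
    assert (Hpt : p * tp + q * tm = 0) by (unfold p, q, tp, tm; field; lra).
    assert (Hp0 : 0 < p) by (unfold p; apply Rdiv_lt_0_compat; lra).
    assert (Hq0 : 0 < q) by (unfold q; apply Rdiv_lt_0_compat; lra).
    assert (Hpure : forall t, t = tp \/ t = tm -> is_pure (vadd x (vscale t e))).
    { intros t Ht. unfold is_pure.
      assert (E : norm2 (vadd x (vscale t e)) = norm2 x + 2*t*b + t^2 * norm2 e).
      { unfold b. destruct x as [[a1 a2] a3], e as [[e1 e2] e3].
        unfold norm2, vadd, vscale, bx1, bx2, bx3; cbn. ring. }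
      rewrite E, He. assert ((t + b)^2 = D).
      { destruct Ht; subst t; unfold tp, tm; nra. }
      unfold D in H. nra. }
    exists [(p, vadd x (vscale tp e)); (q, vadd x (vscale tm e))].
    split; [split; [|split]|].
    + intros pv [<-|[<-|[]]]; simpl; (split; [lra|split; [apply Hpure; auto|eexists; reflexivity]]).
    + simpl. lra.
    + destruct x as [[a1 a2] a3], e as [[e1 e2] e3].
      unfold wsum, vzero, vadd, vscale, bx1, bx2, bx3; cbn [fold_right fst snd].
      f_equal; [f_equal|].
      * transitivity ((p+q)*a1 + (p*tp+q*tm)*e1); [ring|rewrite Hpq, Hpt; ring].
      * transitivity ((p+q)*a2 + (p*tp+q*tm)*e2); [ring|rewrite Hpq, Hpt; ring].
      * transitivity ((p+q)*a3 + (p*tp+q*tm)*e3); [ring|rewrite Hpq, Hpt; ring].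
    + cbn [gcost fold_right fst snd]. rewrite !Hg. transitivity ((p+q)*g x); [ring|rewrite Hpq; ring].
Qed.

Definition wmax (l1 l2 l3 : R) := Rmax (Rmax (l1 ^ 2) (l2 ^ 2)) (l3 ^ 2).
Definition gval (l1 l2 l3 : R) (x : vec) : R :=
  let w := wmax l1 l2 l3 in
  sqrt ((1 - w) * 1 ^ 2
        + ((w - l1 ^ 2) * bx1 x ^ 2 + (w - l2 ^ 2) * bx2 x ^ 2 + (w - l3 ^ 2) * bx3 x ^ 2)).

Lemma gval_Gf l1 l2 l3 x : gval l1 l2 l3 x =
  Gf (1 - wmax l1 l2 l3) (wmax l1 l2 l3 - l1^2) (wmax l1 l2 l3 - l2^2) (wmax l1 l2 l3 - l3^2) 1 x.
Proof. reflexivity. Qed.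

Lemma pos_bounds l1 l2 l3 : positive_map l1 l2 l3 -> wmax l1 l2 l3 <= 1.
Proof.
  intros H.
  assert (H1 := H 1 (1,0,0) Rle_0_1). assert (H2 := H 1 (0,1,0) Rle_0_1). assert (H3 := H 1 (0,0,1) Rle_0_1).
  unfold norm2, Lam, bx1, bx2, bx3 in *; cbn [fst snd] in *.
  assert (l1^2 <= 1) by (apply Rle_trans with ((l1*1)^2 + (l2*0)^2 + (l3*0)^2); [nra|]; replace 1 with (1^2) at 2 by ring; apply H1; lra).
  assert (l2^2 <= 1) by (apply Rle_trans with ((l1*0)^2 + (l2*1)^2 + (l3*0)^2); [nra|]; replace 1 with (1^2) at 2 by ring; apply H2; lra).
  assert (l3^2 <= 1) by (apply Rle_trans with ((l1*0)^2 + (l2*0)^2 + (l3*1)^2); [nra|]; replace 1 with (1^2) at 2 by ring; apply H3; lra).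
  unfold wmax. apply Rmax_lub; auto. apply Rmax_lub; auto.
Qed.

Lemma wmax_ge l1 l2 l3 : l1^2 <= wmax l1 l2 l3 /\ l2^2 <= wmax l1 l2 l3 /\ l3^2 <= wmax l1 l2 l3.
Proof.
  unfold wmax. pose proof (Rmax_l (Rmax (l1 ^ 2) (l2 ^ 2)) (l3 ^ 2)).
  pose proof (Rmax_r (Rmax (l1 ^ 2) (l2 ^ 2)) (l3 ^ 2)).
  pose proof (Rmax_l (l1 ^ 2) (l2 ^ 2)). pose proof (Rmax_r (l1 ^ 2) (l2 ^ 2)). lra.
Qed.

Lemma C_pure_gval l1 l2 l3 y : is_pure y -> C_pure l1 l2 l3 y = gval l1 l2 l3 y.
Proof.
  intros Hy. unfold is_pure, norm2 in Hy. unfold C_pure, gval, det_bloch.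
  set (w := wmax l1 l2 l3).
  set (A := (1 - w) * 1 ^ 2 + ((w - l1 ^ 2) * bx1 y ^ 2 + (w - l2 ^ 2) * bx2 y ^ 2 + (w - l3 ^ 2) * bx3 y ^ 2)).
  replace ((1 ^ 2 - norm2 (Lam l1 l2 l3 y)) / 4) with (A * / 4).
  2: { unfold A, norm2, Lam, bx1, bx2, bx3 in *; cbn [fst snd] in *.
       symmetry. transitivity ((1 - w + w * (fst (fst y) ^ 2 + snd (fst y) ^ 2 + snd y ^ 2)
         - (l1^2 * fst (fst y) ^ 2 + l2^2 * snd (fst y) ^ 2 + l3^2 * snd y ^ 2)) * / 4); [rewrite Hy; field|ring]. }
  destruct (Rle_or_lt 0 A).
  - rewrite sqrt_mult by (auto; left; apply Rinv_0_lt_compat; lra).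
    replace (/ 4) with ((/2)^2) by field. rewrite sqrt_pow2 by lra. field.
  - assert (0 < /4) by (apply Rinv_0_lt_compat; lra). rewrite (sqrt_neg_0 A) by lra. rewrite sqrt_neg_0 by nra. ring.
Qed.

Lemma roof_eq l1 l2 l3 d : (forall pv, In pv d -> is_pure (snd pv)) ->
  roof_cost l1 l2 l3 d = gcost (gval l1 l2 l3) d.
Proof.
  induction d as [|[p y] d IH]; intros H; [reflexivity|].
  cbn [roof_cost gcost fold_right fst snd].
  change (fold_right (fun pv acc => fst pv * C_pure l1 l2 l3 (snd pv) + acc) 0 d) with (roof_cost l1 l2 l3 d).
  change (fold_right (fun pv acc => fst pv * gval l1 l2 l3 (snd pv) + acc) 0 d) with (gcost (gval l1 l2 l3) d).
  rewrite IH by (intros; apply H; right; auto).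
  rewrite C_pure_gval by (apply (H (p,y)); left; auto). reflexivity.
Qed.

Lemma direction l1 l2 l3 : exists e, norm2 e = 1 /\
  forall z t, gval l1 l2 l3 (vadd z (vscale t e)) = gval l1 l2 l3 z.
Proof.
  unfold gval, wmax, Rmax.
  destruct (Rle_dec (l1 ^ 2) (l2 ^ 2)); destruct (Rle_dec _ (l3 ^ 2)).
  - exists (0,0,1). split; [unfold norm2, bx1, bx2, bx3; simpl; ring|].
    intros [[z1 z2] z3] t. unfold vadd, vscale, bx1, bx2, bx3; cbn [fst snd]. f_equal; ring.
  - exists (0,1,0). split; [unfold norm2, bx1, bx2, bx3; simpl; ring|].
    intros [[z1 z2] z3] t. unfold vadd, vscale, bx1, bx2, bx3; cbn [fst snd]. f_equal; ring.
  - exists (0,0,1). split; [unfold norm2, bx1, bx2, bx3; simpl; ring|].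
    intros [[z1 z2] z3] t. unfold vadd, vscale, bx1, bx2, bx3; cbn [fst snd]. f_equal; ring.
  - exists (1,0,0). split; [unfold norm2, bx1, bx2, bx3; simpl; ring|].
    intros [[z1 z2] z3] t. unfold vadd, vscale, bx1, bx2, bx3; cbn [fst snd]. f_equal; ring.
Qed.

Lemma conc l1 l2 l3 x : positive_map l1 l2 l3 -> is_state x ->
  concurrence_is l1 l2 l3 x (gval l1 l2 l3 x).
Proof.
  intros Hpos Hx. destruct (direction l1 l2 l3) as [e [He Hg]]. split.
  - destruct (attain (gval l1 l2 l3) e x He Hg Hx) as [d [[Hd [Hp Hw]] Hc]].
    exists d. split.
    + split; [|split; auto]. intros pv H; destruct (Hd pv H) as [? [? _]]; auto.
    + rewrite roof_eq; auto. intros pv H; destruct (Hd pv H) as [? [? _]]; auto.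
  - intros d [Hd [Hp Hw]]. rewrite roof_eq by (intros pv H; apply (Hd pv H)).
    pose proof (pos_bounds _ _ _ Hpos). pose proof (wmax_ge l1 l2 l3).
    rewrite gval_Gf.
    match goal with |- Gf ?a ?b ?c ?e 1 x <= _ => replace (Gf a b c e 1 x) with (Gf a b c e (psum d) (wsum d)) by (rewrite Hp, Hw; reflexivity) end.
    replace (gval l1 l2 l3) with (Gf (1 - wmax l1 l2 l3) (wmax l1 l2 l3 - l1^2) (wmax l1 l2 l3 - l2^2) (wmax l1 l2 l3 - l3^2) 1) by reflexivity.
    apply Gf_convex; try lra. intros pv H1; left; apply (Hd pv H1).
Qed.

Lemma shift (a e : vec) t0 t : vadd (vadd a (vscale t0 e)) (vscale t e) = vadd a (vscale (t0 + t) e).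
Proof. destruct a as [[a1 a2] a3], e as [[e1 e2] e3]; unfold vadd, vscale, bx1, bx2, bx3; cbn; f_equal; [f_equal|]; ring. Qed.

Lemma flat l1 l2 l3 : positive_map l1 l2 l3 -> flat_roof l1 l2 l3.
Proof.
  intros Hpos. destruct (direction l1 l2 l3) as [e [He Hg]].
  exists (fun L => exists a, is_state a /\ forall z, L z <-> (is_state z /\ exists t, z = vadd a (vscale t e))).
  split; [split; [|split; [|split]]|].
  - intros L [a [Ha HL]].
    exists (fun y => is_pure y /\ exists t, y = vadd a (vscale t e)). split; [intros y [? _]; auto|].
    intros z. rewrite HL. split.
    + intros [Hz [t0 Ht0]].
      destruct (attain (gval l1 l2 l3) e z He Hg Hz) as [d [[Hd [Hp Hw]] _]].
      exists d. split; [|split; auto]. intros pv H. destruct (Hd pv H) as [Hpv [Hpu [t Ht]]].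
      split; auto. split; auto. exists (t0 + t). rewrite Ht, Ht0. apply shift.
    + intros [d [Hd [Hp Hw]]]. split.
      * apply (state_of_conv d). split; [|split; auto]. intros pv H; destruct (Hd pv H) as [? [? _]]; auto.
      * destruct (line_wsum a e d) as [T HT]. { intros pv H; destruct (Hd pv H) as [_ [_ Ht]]; auto. }
        exists T. rewrite <- Hw, HT, Hp. destruct a as [[a1 a2] a3], e as [[e1 e2] e3];
        unfold vadd, vscale, bx1, bx2, bx3; cbn; f_equal; [f_equal|]; ring.
  - intros L [a [Ha HL]]. exists a. apply HL. split; auto. exists 0.
    destruct a as [[a1 a2] a3], e as [[e1 e2] e3];
    unfold vadd, vscale, bx1, bx2, bx3; cbn; f_equal; [f_equal|]; ring.
  - intros x Hx. exists (fun z => is_state z /\ exists t, z = vadd x (vscale t e)). split.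
    + exists x. split; auto. tauto.
    + split; auto. exists 0. destruct x as [[a1 a2] a3], e as [[e1 e2] e3];
      unfold vadd, vscale, bx1, bx2, bx3; cbn; f_equal; [f_equal|]; ring.
  - intros L L' x [a [Ha HL]] [a' [Ha' HL']] Hx Hx' z.
    rewrite HL in Hx. rewrite HL' in Hx'. rewrite HL, HL'.
    destruct Hx as [_ [t1 H1]], Hx' as [_ [t2 H2]].
    assert (Ea : a = vadd a' (vscale (t2 - t1) e)).
    { rewrite H1 in H2. destruct a as [[a1 a2] a3], a' as [[b1 b2] b3], e as [[e1 e2] e3].
      unfold vadd, vscale, bx1, bx2, bx3 in *; cbn in *. inversion H2.
      f_equal; [f_equal|]; lra. }
    split; intros [Hz [t Ht]]; split; auto.
    + exists (t2 - t1 + t). rewrite Ht, Ea. apply shift.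
    + exists (t - (t2 - t1)). rewrite Ht, Ea, shift. f_equal. f_equal. ring.
  - intros L [a [Ha HL]]. exists (gval l1 l2 l3 a). intros x Hx.
    apply HL in Hx. destruct Hx as [Hx [t Ht]].
    replace (gval l1 l2 l3 a) with (gval l1 l2 l3 x) by (rewrite Ht; apply Hg).
    apply conc; auto.
Qed.

Theorem mainTheorem4 (l1 l2 l3 : R) :
  positive_map l1 l2 l3 ->
  (forall x : vec, is_state x ->
     concurrence_is l1 l2 l3 x
       (let w := Rmax (Rmax (l1 ^ 2) (l2 ^ 2)) (l3 ^ 2) in
        sqrt ((1 - w) * 1 ^ 2
              + ((w - l1 ^ 2) * bx1 x ^ 2 + (w - l2 ^ 2) * bx2 x ^ 2
                 + (w - l3 ^ 2) * bx3 x ^ 2)))) /\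
  flat_roof l1 l2 l3.
Proof.
  intros Hpos. split.
  - intros x Hx. exact (conc l1 l2 l3 x Hpos Hx).
  - apply flat; auto.
Qed.
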